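(* Let $p,q\geq 2$ be relatively prime integers, let $t>0$ and $k\geq 2t+1$ be integers, and let $w_1,w_2\in A_{pq}^k$. Then (1) if $\mathrm{int}(w_1)<q^{2t}$ then $\mathrm{int}(F_{p,q}^t(w_1))=0$; and (2) if $\mathrm{int}(w_2)\equiv\mathrm{int}(w_1)+q^{2t}\pmod{(pq)^k}$ then $\mathrm{int}(F_{p,q}^t(w_2))\equiv\mathrm{int}(F_{p,q}^t(w_1))+1\pmod{(pq)^{k-2t}}$.
   Context: For an integer $n>1$, $A_n=\{0,\dots,n-1\}$, and $A_n^k$ is the set of words of length $k$. Define $g_{p,q}:A_{pq}\times A_{pq}\to A_{pq}$ by writing $x=x_1q+x_0$, $y=y_1q+y_0$ with $x_0,y_0\in A_q$, $x_1,y_1\in A_p$ (uniquely), and $g_{p,q}(x,y)=x_0p+y_1$, and $f_{p,q}(x,a,y)=g_{p,q}(g_{p,q}(x,a),g_{p,q}(a,y))$. For a word $w=w(1)\cdots w(m)$ with $m\geq3$, $F_{p,q}(w)=u(1)\cdots u(m-2)$ with $u(i)=f_{p,q}(w(i),w(i+1),w(i+2))$, and for $m\geq 2t+1$, $F_{p,q}^t(w)=F_{p,q}(F_{p,q}^{t-1}(w))$, a word of length $m-2t$. For a nonempty word $w=w(1)\cdots w(m)$ over $A_{pq}$, $\mathrm{int}(w)=\sum_{i=0}^{m-1}w(m-i)(pq)^i$. *)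

(* Defs.v *)
From mathcomp Require Import all_boot.
Set Implicit Arguments. Unset Strict Implicit. Unset Printing Implicit Defensive.

Definition is_word (n k : nat) (w : seq nat) : bool :=
  (size w == k) && all (fun a => a < n) w.

(* g_{p,q}(x,y) = x0 * p + y1 where x = x1 q + x0, y = y1 q + y0,
   x0 = x mod q, y1 = y div q (valid for x,y in A_{pq}). *)
Definition g (p q x y : nat) : nat := (x %% q) * p + y %/ q.

Definition f (p q x a y : nat) : nat := g p q (g p q x a) (g p q a y).

(* F_{p,q}(w)(i) = f(w(i), w(i+1), w(i+2)), for i = 1..m-2 (0-indexed here). *)
Definition F (p q : nat) (w : seq nat) : seq nat :=
  [seq f p q (nth 0 w i) (nth 0 w i.+1) (nth 0 w i.+2) | i <- iota 0 (size w - 2)].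

Definition Fiter (p q t : nat) (w : seq nat) : seq nat := iter t (F p q) w.

(* int(w) = sum_{i=0}^{m-1} w(m-i) (pq)^i : base-pq value, most significant first. *)
Definition intw (p q : nat) (w : seq nat) : nat :=
  foldl (fun acc a => acc * (p * q) + a) 0 w.

(* Main.v *)
Require Import Defs.
From mathcomp Require Import all_boot zify.
From Stdlib Require Import ArithRing.

Section S.
Variables p q : nat.

Fixpoint Gr (w : seq nat) : seq nat :=
  match w with
  | x :: ((y :: _) as s) => g p q x y :: Gr s
  | _ => [::]
  end.

Lemma foldl_int acc s :
  foldl (fun acc a => acc * (p * q) + a) acc s = acc * (p * q) ^ size s + intw p q s.
Proof.
elim: s acc => [|a s IH] acc /=; first by rewrite muln1 addn0.
rewrite /intw /= IH [in RHS]IH add0n expnS; nia.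
Qed.

Lemma intw_cons x s : intw p q (x :: s) = x * (p * q) ^ size s + intw p q s.
Proof. by rewrite /intw /= foldl_int add0n. Qed.

Lemma intw_lt s : 0 < p * q -> all (fun a => a < p * q) s -> intw p q s < (p * q) ^ size s.
Proof.
move=> h; elim: s => [|a s IH] /=; first by rewrite /intw.
move=> /andP [ha hs]; rewrite intw_cons expnS.
have := IH hs; nia.
Qed.

Lemma size_Gr w : size (Gr w) = (size w).-1.
Proof. elim: w => [|x [|y s] IH] //=; by rewrite IH. Qed.

Lemma nth_Gr w i : i < (size w).-1 ->
  nth 0 (Gr w) i = g p q (nth 0 w i) (nth 0 w i.+1).
Proof.
elim: w i => [|x [|y s] IH] i //=.
case: i => [|i] //= hi; by rewrite IH.
Qed.

Lemma Gr_all w : 0 < q -> all (fun a => a < p * q) w -> all (fun a => a < p * q) (Gr w).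
Proof.
move=> hq; elim: w => [|x [|y s] IH] //= /andP [hx /andP [hy hs]].
apply/andP; split; last by apply: IH; rewrite /= hy hs.
rewrite /g.
have h1 : x %% q < q by rewrite ltn_mod.
have h2 : y %/ q < p by rewrite ltn_divLR // mulnC.
nia.
Qed.

Lemma Gr_cons2 x y s : Gr (x :: y :: s) = g p q x y :: Gr (y :: s).
Proof. by []. Qed.

Lemma Gr_id w : 0 < q -> 0 < size w ->
  intw p q (Gr w) + (head 0 w %/ q) * (p * q) ^ (size w).-1 = intw p q w %/ q.
Proof.
move=> hq; elim: w => [|x [|y s] IH] // _.
  by rewrite /intw /= muln1.
have IH' := IH isT.
rewrite Gr_cons2 intw_cons size_Gr [head _ _]/=.
rewrite [head _ _]/= [(size (y :: s)).-1]/= in IH'.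
rewrite [intw p q (x :: _)]intw_cons [intw p q (y :: s)]intw_cons in IH' *.
rewrite [(size (y :: s)).-1]/= [size (y :: s)]/= expnS.
set P := (p * q) ^ size s.
have -> : x * (p * q * P) + (y * P + intw p q s) = (x * p * P) * q + (y * P + intw p q s) by rewrite -!multE -!plusE; ring.
rewrite divnMDl // -IH' /g.
rewrite [X in X * p * P](divn_eq x q).
move: (x %/ q) (x %% q) (y %/ q) (intw p q (Gr (y :: s))) => a b c d.
rewrite -/P.
rewrite -!multE -!plusE; ring.
Qed.

Lemma intG w : 0 < p -> 0 < q -> all (fun a => a < p * q) w -> 0 < size w ->
  intw p q (Gr w) = (intw p q w %/ q) %% (p * q) ^ (size w).-1.
Proof.
move=> hp hq ha hs; rewrite -Gr_id // addnC modnMDl modn_small //.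
rewrite -size_Gr; apply: intw_lt; first by rewrite muln_gt0 hp.
exact: Gr_all.
Qed.

Lemma F_eq w : F p q w = Gr (Gr w).
Proof.
apply: (@eq_from_nth _ 0).
  by rewrite size_map size_iota !size_Gr; case: (size w) => [|[|n]] //=; rewrite subn2.
rewrite size_map size_iota => i hi.
rewrite (nth_map 0) ?size_iota // nth_iota // add0n.
rewrite nth_Gr ?size_Gr; last by move: hi; case: (size w) => [|[|n]] //=; rewrite subn2.
rewrite !nth_Gr //; move: hi; case: (size w) => [|[|n]] //=; rewrite subn2 //= => h; lia.
Qed.

Lemma modH a M : 0 < q -> (a %% (p * q * M)) %/ q %% M = a %/ q %% M.
Proof.
move=> hq; rewrite (_ : p * q * M = (p * M) * q); last by rewrite mulnAC.
by rewrite -modn_divl modn_dvdm // dvdn_mull.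
Qed.

End S.

Lemma Fiter_spec p q t w : 0 < p -> 0 < q -> all (fun a => a < p * q) w -> 2 * t <= size w ->
  [/\ size (Fiter p q t w) = size w - 2 * t, all (fun a => a < p * q) (Fiter p q t w) &
      intw p q (Fiter p q t w) = (intw p q w %/ q ^ (2 * t)) %% (p * q) ^ (size w - 2 * t)].
Proof.
move=> hp hq ha; elim: t => [|t IH] ht.
  rewrite /Fiter /= muln0 expn0 divn1 subn0 modn_small //.
  by apply: intw_lt => //; rewrite muln_gt0 hp.
have [hs hall hint] := IH (leq_trans (leq_mul (leqnn 2) (leqnSn t)) ht).
rewrite /Fiter iterS -/(Fiter p q t w) F_eq.
set v := Fiter p q t w in hs hall hint *.
have : 2 <= size v by rewrite hs; lia.
case E: (size v) => [|[|m]] // _.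
have hsz : size w - 2 * t.+1 = m by move: E; rewrite hs; lia.
have hG : size (Gr p q v) = m.+1 by rewrite size_Gr E.
split.
- by rewrite !size_Gr E hsz.
- by do 2 apply: Gr_all => //.
rewrite hsz (intG _ _ _ hp hq (Gr_all _ _ _ hq hall)) ?hG // (intG _ _ _ hp hq hall) ?E //=.
rewrite hint -hs E expnS modH // expnS modH //.
rewrite -!divnMA.
by rewrite (_ : 2 * t.+1 = 2 * t + 2) ?expnD // mulnS addnC.
Qed.

Theorem lemma10 (p q t k : nat) (w1 w2 : seq nat) :
  2 <= p -> 2 <= q -> coprime p q -> 0 < t -> 2 * t + 1 <= k ->
  is_word (p * q) k w1 -> is_word (p * q) k w2 ->
  (intw p q w1 < q ^ (2 * t) -> intw p q (Fiter p q t w1) = 0) /\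
  (intw p q w2 = intw p q w1 + q ^ (2 * t) %[mod (p * q) ^ k] ->
   intw p q (Fiter p q t w2) = intw p q (Fiter p q t w1) + 1 %[mod (p * q) ^ (k - 2 * t)]).
Proof.
move=> hp2 hq2 _ _ hk /andP [/eqP hs1 ha1] /andP [/eqP hs2 ha2].
have hp : 0 < p by lia.
have hq : 0 < q by lia.
have htk : 2 * t <= k by lia.
have e1 : 2 * t <= size w1 by rewrite hs1.
have e2 : 2 * t <= size w2 by rewrite hs2.
have [_ _ i1] := Fiter_spec _ _ _ _ hp hq ha1 e1.
have [_ _ i2] := Fiter_spec _ _ _ _ hp hq ha2 e2.
rewrite hs1 in i1; rewrite hs2 in i2.
split.
  by move=> h; rewrite i1 divn_small ?mod0n.
move=> h; rewrite i1 i2 modn_mod modnDml.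
have lt2 : intw p q w2 < (p * q) ^ k by rewrite -hs2; apply: intw_lt => //; rewrite muln_gt0 hp.
rewrite -(modn_small lt2) h.
set N := (p * q) ^ (k - 2 * t).
have hK : (p * q) ^ k = (p ^ k * q ^ (k - 2 * t)) * q ^ (2 * t).
  by rewrite expnMn -mulnA -expnD subnK.
rewrite hK -modn_divl.
rewrite (_ : intw p q w1 + q ^ (2 * t) = 1 * q ^ (2 * t) + intw p q w1); last by rewrite mul1n addnC.
rewrite divnMDl ?expn_gt0 ?hq // addnC.
apply: modn_dvdm.
by rewrite /N expnMn dvdn_mul // dvdn_exp2l // leq_subr.
Qed.
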